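(* Let $s\geq 1$ and $n\geq 2s$ be integers, and let $G^*=K_1\vee(K_{n-2}\cup K_1)$. (i) If $n\geq 2s+2$, then $\lambda_1(D(G^* ))\le \lambda_1(D(K_s\vee(K_{n-2s}\cup sK_1)))$, with equality if and only if $s=1$. (ii) If $n=2s+1$, then $\lambda_1(D(G^* ))\le \lambda_1(D(S_{n,\frac{n-1}{2}}))$, with equality if and only if $n=3$. (iii) If $n=2s$ and $n\geq 10$, then $\lambda_1(D(G^* ))<\lambda_1(D(S_{n,\frac{n}{2}}))$. (iv) If $n=2s$ and $2\le n\le 8$, then $\lambda_1(D(S_{n,\frac{n}{2}}))\le \lambda_1(D(G^* ))$, with equality if and only if $n=2$.
   Context: All graphs are finite, simple, undirected. For a connected graph $G$, $D(G)$ is its distance matrix (entry $(i,j)$ is the distance between $v_i$ and $v_j$) and $\lambda_1(D(G))$ its largest eigenvalue. $G\cup H$ is disjoint union, $G\vee H$ the join (disjoint union plus all edges between the two vertex sets), $tK_1$ the edgeless graph on $t$ vertices, $K_0$ the empty graph, and $S_{n,k}=K_k\vee(n-k)K_1$. *)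

(* Defs.v *)
From HB Require Import structures.
From mathcomp Require Import all_boot all_order all_algebra.
From mathcomp Require Import reals classical_sets.
Set Implicit Arguments. Unset Strict Implicit. Unset Printing Implicit Defensive.
Import Order.TTheory GRing.Theory Num.Theory.

(* A simple graph on vertex set 'I_N is a symmetric irreflexive relation. *)
Definition graph (N : nat) := rel 'I_N.

Definition complete (k : nat) : graph k := fun i j => i != j.
Definition edgeless (k : nat) : graph k := fun _ _ => false.
Arguments complete k : clear implicits.
Arguments edgeless k : clear implicits.

Definition gunion m k (g : graph m) (h : graph k) : graph (m + k) :=
  fun i j => match split i, split j with
             | inl a, inl b => g a b
             | inr a, inr b => h a b
             | _, _ => false
             end.

Definition gjoin m k (g : graph m) (h : graph k) : graph (m + k) :=
  fun i j => match split i, split j with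
             | inl a, inl b => g a b
             | inr a, inr b => h a b
             | _, _ => true
             end.

Fixpoint reach N (g : graph N) (d : nat) (i j : 'I_N) : bool :=
  match d with
  | 0 => i == j
  | d'.+1 => reach g d' i j || [exists m, reach g d' i m && g m j]
  end.

(* Graph distance: least d with a walk of length d (for a connected graph on
   N vertices this is < N; unreachable pairs would get N). *)
Definition gdist N (g : graph N) (i j : 'I_N) : nat :=
  find (fun d => reach g d i j) (iota 0 N).

Local Open Scope ring_scope.

Definition distmx (R : pzRingType) N (g : graph N) : 'M[R]_N :=
  \matrix_(i, j) (gdist g i j)%:R.

Definition lambda1 (R : realType) N (A : 'M[R]_N) : R :=
  sup [set a : R | eigenvalue A a].

Definition Gstar (n : nat) := gjoin (complete 1) (gunion (complete (n - 2)) (complete 1)).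
Definition Hsn (s n : nat) := gjoin (complete s) (gunion (complete (n - 2 * s)) (edgeless s)).
Definition Snk (n k : nat) := gjoin (complete k) (edgeless (n - k)).
Arguments Gstar n : clear implicits.
Arguments Hsn s n : clear implicits.
Arguments Snk n k : clear implicits.

(* Main.v *)
Require Import Defs.
From HB Require Import structures.
From mathcomp Require Import all_boot all_order all_algebra.
From mathcomp Require Import reals classical_sets boolp.
From mathcomp Require Import ring lra zify.
Import Order.TTheory GRing.Theory Num.Theory.
Set Implicit Arguments. Unset Strict Implicit. Unset Printing Implicit Defensive.
Local Open Scope ring_scope.


Section Gen.
Variable R : realType.

Lemma eig_le N (A : 'M[R]_N) (y : 'rV[R]_N) (r a : R) :
  (forall i j, 0 <= A i j) -> (forall i, 0 < y 0 i) ->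
  (forall j, (y *m A) 0 j <= r * y 0 j) -> eigenvalue A a -> a <= r.
Proof.
move=> A0 y0 yA /eigenvalueP [v vA vn0].
have [i0 vi0] : exists i, v 0 i != 0.
  apply/existsP; apply: contraNT vn0 => /existsPn H; apply/eqP/rowP => i.
  by rewrite mxE; apply/eqP/negPn/H.
pose t i := `|v 0 i| / y 0 i.
case: (@arg_maxP _ _ 'I_N i0 xpredT t isT) => j _ tj.
have tpos : 0 < t j.
  apply: lt_le_trans (tj i0 isT); rewrite /t divr_gt0 ?normr_gt0 //.
have vj : `|v 0 j| = t j * y 0 j by rewrite /t divfK // gt_eqF.
have vjpos : 0 < `|v 0 j| by rewrite vj mulr_gt0.
have key : `|a| * `|v 0 j| <= r * `|v 0 j|.
  have -> : `|a| * `|v 0 j| = `|(v *m A) 0 j|.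
    by rewrite vA mxE normrM.
  rewrite mxE; apply: le_trans (ler_norm_sum _ _ _) _.
  apply: (@le_trans _ _ (\sum_i t j * (y 0 i * A i j))).
    apply: ler_sum => i _; rewrite normrM (ger0_norm (A0 _ _)).
    rewrite mulrA ler_wpM2r //.
    have HH : t i <= t j := tj i isT.
    by rewrite /t ler_pdivrMr // in HH.
  rewrite -mulr_sumr vj mulrCA; apply: ler_wpM2l; first exact: ltW.
  by have := yA j; rewrite mxE.
have := ler_pM2r vjpos; move=> H; rewrite H in key.
exact: le_trans (ler_norm a) key.
Qed.

Lemma lambda1_le N (A : 'M[R]_N) r :
  (forall a, eigenvalue A a -> a <= r) -> 0 <= r -> lambda1 A <= r.
Proof.
move=> H r0; rewrite /lambda1; set E := (X in sup X).
have [[x Hx]|nE] := pselect (exists x, eigenvalue A x); last first.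
  have -> : E = set0.
    by apply/seteqP; split => a //= Ha; apply: nE; exists a.
  by rewrite sup0.
apply: ge_sup; first by exists x.
by move=> a /= Ha; apply: H.
Qed.

Lemma lambda1_ge N (A : 'M[R]_N) r x :
  (forall a, eigenvalue A a -> a <= r) -> eigenvalue A x -> x <= lambda1 A.
Proof.
move=> H Hx; rewrite /lambda1; apply: ub_le_sup => //.
by exists r => a /= Ha; apply: H.
Qed.

End Gen.


Lemma reach_ext N (g1 g2 : graph N) : (forall i j, g1 i j = g2 i j) ->
  forall d i j, reach g1 d i j = reach g2 d i j.
Proof.
move=> e; elim=> [|d IH] i j //=; rewrite IH; congr (_ || _).
by apply: eq_existsb => m; rewrite IH e.
Qed.

Lemma distmx_ext (R : pzRingType) N (g1 g2 : graph N) : (forall i j, g1 i j = g2 i j) ->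
  distmx R g1 = distmx R g2.
Proof.
move=> e; apply/matrixP => i j; rewrite !mxE /gdist; congr (_%:R).
by apply: eq_find => d; apply: reach_ext.
Qed.

Lemma find_iota_k (a : pred nat) N k : (k < N)%N -> a k ->
  (forall k', (k' < k)%N -> ~~ a k') -> find a (iota 0 N) = k.
Proof.
move=> kN ak H.
rewrite -(subnKC kN) iotaD find_cat.
have -> : has a (iota 0 k.+1).
  by apply/hasP; exists k; [rewrite mem_iota add0n leq0n ltnSn | exact: ak].
rewrite -addn1 iotaD find_cat add0n.
have -> : has a (iota 0 k) = false.
  apply/negbTE/hasPn => x; rewrite mem_iota add0n => /andP[_ xk]; exact: H.
by rewrite size_iota /= ak addn0.
Qed.

Lemma reach1 N (g : graph N) i j : reach g 1 i j = (i == j) || g i j.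
Proof.
rewrite /=; congr (_ || _); apply/existsP/idP => [[m /andP[/eqP -> ->]] //|gij].
by exists i; rewrite eqxx.
Qed.

Lemma gdist0 N (g : graph N) i : gdist g i i = 0%N.
Proof. apply: find_iota_k => //; [exact: leq_ltn_trans (ltn_ord i) | by rewrite /= eqxx]. Qed.

Lemma gdist1 N (g : graph N) i j : i != j -> g i j -> gdist g i j = 1%N.
Proof.
move=> ij gij; apply: find_iota_k.
- have := ltn_ord i; have := ltn_ord j; move: ij; rewrite -val_eqE /=; lia.
- by rewrite reach1 gij orbT.
- by move=> k'; rewrite ltnS leqn0 => /eqP ->.
Qed.

Lemma gdist2 N (g : graph N) i j m : i != j -> ~~ g i j -> g i m -> g m j ->
  gdist g i j = 2%N.
Proof.
move=> ij gij gim gmj.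
have im : i != m by apply: contraNneq gij => ->.
have mj : m != j by apply: contraNneq gij => <-.
apply: find_iota_k.
- have := ltn_ord i; have := ltn_ord j; have := ltn_ord m.
  move: ij im mj; rewrite -!val_eqE /=; lia.
- have r1 : reach g 1 i m by rewrite reach1 gim orbT.
  apply/orP; right; apply/existsP; exists m; apply/andP; split => //.
- move=> k'; rewrite ltnS leq_eqVlt => /orP[/eqP ->|]; first by rewrite reach1 (negbTE ij) (negbTE gij).
  by rewrite ltnS leqn0 => /eqP -> /=.
Qed.

Definition adjT (p q : nat) : bool := [|| p == 0%N, q == 0%N | (p == 1%N) && (q == 1%N)].
Definition Md (R : pzRingType) (p q : nat) : R := if adjT p q then 1 else 2.

Lemma distmx_class (R : pzRingType) N (g : graph N) (cl : 'I_N -> nat) (m0 : 'I_N) :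
  cl m0 = 0%N -> (forall i j, g i j = (i != j) && adjT (cl i) (cl j)) ->
  distmx R g = \matrix_(i, j) (if i == j then 0 else Md R (cl i) (cl j)).
Proof.
move=> c0 gE; apply/matrixP => i j; rewrite !mxE.
have [->|ij] := eqVneq i j; first by rewrite gdist0.
rewrite /Md; case A: (adjT (cl i) (cl j)).
  by rewrite (gdist1 ij) // gE ij A.
have gim : g i m0.
  rewrite gE c0 /adjT orbT andbT; apply: contraFneq A => ->.
  by rewrite c0.
have gmj : g m0 j.
  rewrite gE c0 /adjT /= andbT; apply: contraFneq A => <-.
  by rewrite c0 /adjT orbT.
by rewrite (gdist2 ij _ gim gmj) // gE ij A.
Qed.

Lemma mul_class (R : pzRingType) N (cl : 'I_N -> nat) (w : nat -> R) (j : 'I_N) :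
  ((\row_i w (cl i)) *m (\matrix_(i, j) (if i == j then 0 else Md R (cl i) (cl j)))) 0 j
  = \sum_i w (cl i) * Md R (cl i) (cl j) - w (cl j) * Md R (cl j) (cl j).
Proof.
rewrite !mxE (bigD1 j) //= [X in _ = X - _](bigD1 j) //= !mxE eqxx mulr0 add0r.
rewrite addrAC subrr add0r; apply: eq_bigr => i ij; by rewrite !mxE (negbTE ij).
Qed.


Definition T a b e : graph (a + (b + e)) :=
  gjoin (complete a) (gunion (complete b) (edgeless e)).
Arguments T a b e : clear implicits.
Definition clT a b e (i : 'I_(a + (b + e))) : nat :=
  match split i with inl _ => 0%N | inr k => match split k with inl _ => 1%N | inr _ => 2%N end end.

Definition S2 a e : graph (a + e) := gjoin (complete a) (edgeless e).
Arguments S2 a e : clear implicits.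
Definition clS a e (i : 'I_(a + e)) : nat :=
  match split i with inl _ => 0%N | inr _ => 2%N end.

Lemma split_l m n (x : 'I_m) : split (lshift n x) = inl x.
Proof. exact: (unsplitK (inl x)). Qed.
Lemma split_r m n (x : 'I_n) : split (rshift m x) = inr x.
Proof. exact: (unsplitK (inr x)). Qed.

Lemma T_adj a b e i j : T a b e i j = (i != j) && adjT (clT i) (clT j).
Proof.
rewrite /T /gjoin /gunion /clT /complete /edgeless.
case: split_ordP => [x ->|x ->]; case: split_ordP => [y ->|y ->];
  rewrite ?eq_lshift ?eq_rshift ?eq_lrshift ?eq_rlshift /adjT /= ?orbT ?andbT //.
case: (split_ordP x) => [z ->|z ->]; case: (split_ordP y) => [u ->|u ->];
  by rewrite ?eq_lshift ?eq_rshift ?eq_lrshift ?eq_rlshift ?andbT ?andbF.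
Qed.

Lemma S_adj a e i j : S2 a e i j = (i != j) && adjT (clS i) (clS j).
Proof.
rewrite /S2 /gjoin /clS /complete /edgeless.
by case: split_ordP => [x ->|x ->]; case: split_ordP => [y ->|y ->];
  rewrite ?eq_lshift ?eq_rshift ?eq_lrshift ?eq_rlshift ?andbT ?andbF.
Qed.

Lemma clT_l a b e (x : 'I_a) : clT (lshift (b + e) x) = 0%N.
Proof. by rewrite /clT split_l. Qed.
Lemma clT_m a b e (x : 'I_b) : clT (rshift a (lshift e x) : 'I_(a + (b + e))) = 1%N.
Proof. by rewrite /clT split_r split_l. Qed.
Lemma clT_r a b e (x : 'I_e) : clT (rshift a (rshift b x) : 'I_(a + (b + e))) = 2%N.
Proof. by rewrite /clT split_r split_r. Qed.
Lemma clS_l a e (x : 'I_a) : clS (lshift e x) = 0%N.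
Proof. by rewrite /clS split_l. Qed.
Lemma clS_r a e (x : 'I_e) : clS (rshift a x) = 2%N.
Proof. by rewrite /clS split_r. Qed.

Lemma clT_range a b e (i : 'I_(a + (b + e))) : [\/ clT i = 0%N, clT i = 1%N | clT i = 2%N].
Proof. rewrite /clT; case: (split i) => [x|x]; [|case: (split x)]; by constructor. Qed.
Lemma clS_range a e (i : 'I_(a + e)) : clS i = 0%N \/ clS i = 2%N.
Proof. rewrite /clS; case: (split i) => [x|x]; by [left|right]. Qed.

Lemma sum_T (R : nmodType) a b e (F : nat -> R) :
  \sum_(i < a + (b + e)) F (clT i) = F 0%N *+ a + F 1%N *+ b + F 2%N *+ e.
Proof.
rewrite big_split_ord /= big_split_ord /= -addrA.
under eq_bigr do rewrite clT_l.
under [X in _ + (X + _)]eq_bigr do rewrite clT_m.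
under [X in _ + (_ + X)]eq_bigr do rewrite clT_r.
by rewrite !sumr_const !card_ord.
Qed.

Lemma sum_S (R : nmodType) a e (F : nat -> R) :
  \sum_(i < a + e) F (clS i) = F 0%N *+ a + F 2%N *+ e.
Proof.
rewrite big_split_ord /=.
under eq_bigr do rewrite clS_l.
under [X in _ + X]eq_bigr do rewrite clS_r.
by rewrite !sumr_const !card_ord.
Qed.


Section Eig.
Variable R : realType.

Lemma eig_bounded N (A : 'M[R]_N) : (forall i j, 0 <= A i j) ->
  exists r, forall a, eigenvalue A a -> a <= r.
Proof.
move=> A0; exists (\sum_i \sum_j A i j) => a Ha.
apply: (@eig_le _ _ A (\row_i 1)) Ha => // [i|j]; first by rewrite mxE ltr01.
rewrite [X in _ <= _ * X]mxE mulr1 mxE; apply: ler_sum => i _; rewrite mxE mul1r.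
rewrite (bigD1 j) //= lerDl; apply: sumr_ge0 => *; exact: A0.
Qed.

Lemma Md_ge0 p q : 0 <= Md R p q.
Proof. by rewrite /Md; case: adjT; rewrite ?ler01 ?ler0n. Qed.

Definition w3 (w0 w1 w2 : R) (p : nat) : R :=
  if p == 0%N then w0 else if p == 1%N then w1 else w2.

Lemma distT a b e : (0 < a)%N ->
  distmx R (T a b e) = \matrix_(i, j) (if i == j then 0 else Md R (clT i) (clT j)).
Proof.
move=> a0; apply: (@distmx_class _ _ _ _ (lshift (b + e) (Ordinal a0))).
  exact: clT_l.
exact: T_adj.
Qed.

Lemma distS a e : (0 < a)%N ->
  distmx R (S2 a e) = \matrix_(i, j) (if i == j then 0 else Md R (clS i) (clS j)).
Proof.
move=> a0; apply: (@distmx_class _ _ _ _ (lshift e (Ordinal a0))).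
  exact: clS_l.
exact: S_adj.
Qed.

Lemma mulT a b e w0 w1 w2 (j : 'I_(a + (b + e))) :
  ((\row_i w3 w0 w1 w2 (clT i)) *m
     (\matrix_(i, j) (if i == j then 0 else Md R (clT i) (clT j)))) 0 j =
  w3 (a%:R * w0 + b%:R * w1 + e%:R * w2 - w0)
     (a%:R * w0 + b%:R * w1 + 2 * e%:R * w2 - w1)
     (a%:R * w0 + 2 * b%:R * w1 + 2 * e%:R * w2 - 2 * w2) (clT j).
Proof.
rewrite mul_class (sum_T _ _ _ (fun p => w3 w0 w1 w2 p * Md R p (clT j))) /w3 /Md /adjT.
case: (clT_range j) => ->/=; rewrite ?mulr1 ?mulr_natl //; ring.
Qed.

Lemma mulS a e w0 w2 (j : 'I_(a + e)) :
  ((\row_i w3 w0 0 w2 (clS i)) *m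
     (\matrix_(i, j) (if i == j then 0 else Md R (clS i) (clS j)))) 0 j =
  w3 (a%:R * w0 + e%:R * w2 - w0) 0
     (a%:R * w0 + 2 * e%:R * w2 - 2 * w2) (clS j).
Proof.
rewrite mul_class (sum_S _ _ (fun p => w3 w0 0 w2 p * Md R p (clS j))) /w3 /Md /adjT.
case: (clS_range j) => ->/=; rewrite ?mulr1 ?mulr_natl //; ring.
Qed.


Lemma T_up a b e (r w0 w1 w2 : R) : (0 < a)%N -> 0 < w0 -> 0 < w1 -> 0 < w2 -> 0 <= r ->
  a%:R * w0 + b%:R * w1 + e%:R * w2 - w0 <= r * w0 ->
  a%:R * w0 + b%:R * w1 + 2 * e%:R * w2 - w1 <= r * w1 ->
  a%:R * w0 + 2 * b%:R * w1 + 2 * e%:R * w2 - 2 * w2 <= r * w2 ->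
  lambda1 (distmx R (T a b e)) <= r.
Proof.
move=> a0 p0 p1 p2 r0 h0 h1 h2; rewrite distT //.
apply: lambda1_le => // x; apply: (@eig_le R _ _ (\row_i w3 w0 w1 w2 (clT i))).
- by move=> i j; rewrite mxE; case: eqP => _; rewrite ?Md_ge0.
- by move=> i; rewrite mxE /w3; case: (clT_range i) => ->.
- by move=> j; rewrite mulT [X in _ <= _ * X]mxE /w3; case: (clT_range j) => ->.
Qed.

Lemma T_low a b e (x w0 w1 w2 : R) : (0 < a)%N ->
  a%:R * w0 + b%:R * w1 + e%:R * w2 - w0 = x * w0 ->
  a%:R * w0 + b%:R * w1 + 2 * e%:R * w2 - w1 = x * w1 ->
  a%:R * w0 + 2 * b%:R * w1 + 2 * e%:R * w2 - 2 * w2 = x * w2 ->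
  [\/ w0 != 0, (0 < b)%N /\ w1 != 0 | (0 < e)%N /\ w2 != 0] ->
  x <= lambda1 (distmx R (T a b e)).
Proof.
move=> a0 h0 h1 h2 nz; rewrite distT //.
set D := \matrix_(i, j) _.
have D0 : forall i j, 0 <= D i j.
  by move=> i j; rewrite mxE; case: eqP => _; rewrite ?Md_ge0.
have [r Hr] := eig_bounded D0.
apply: (lambda1_ge Hr); apply/eigenvalueP; exists (\row_i w3 w0 w1 w2 (clT i)).
  apply/rowP => j; rewrite mulT [RHS]mxE mxE /w3.
  by case: (clT_range j) => ->.
have [i wi] : exists i : 'I_(a + (b + e)), w3 w0 w1 w2 (clT i) != 0.
  case: nz => [n0|[b0 n1]|[e0 n2]].
  - by exists (lshift (b + e) (Ordinal a0)); rewrite clT_l.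
  - by exists (rshift a (lshift e (Ordinal b0))); rewrite clT_m.
  - by exists (rshift a (rshift b (Ordinal e0))); rewrite clT_r.
apply: contraNneq wi => /rowP/(_ i). rewrite !mxE. by move=> ->.
Qed.

Lemma S_up a e (r w0 w2 : R) : (0 < a)%N -> 0 < w0 -> 0 < w2 -> 0 <= r ->
  a%:R * w0 + e%:R * w2 - w0 <= r * w0 ->
  a%:R * w0 + 2 * e%:R * w2 - 2 * w2 <= r * w2 ->
  lambda1 (distmx R (S2 a e)) <= r.
Proof.
move=> a0 p0 p2 r0 h0 h2; rewrite distS //.
apply: lambda1_le => // x; apply: (@eig_le R _ _ (\row_i w3 w0 0 w2 (clS i))).
- by move=> i j; rewrite mxE; case: eqP => _; rewrite ?Md_ge0.
- by move=> i; rewrite mxE /w3; case: (clS_range i) => ->.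
- by move=> j; rewrite mulS [X in _ <= _ * X]mxE /w3; case: (clS_range j) => ->.
Qed.

Lemma S_low a e (x w0 w2 : R) : (0 < a)%N ->
  a%:R * w0 + e%:R * w2 - w0 = x * w0 ->
  a%:R * w0 + 2 * e%:R * w2 - 2 * w2 = x * w2 -> w0 != 0 ->
  x <= lambda1 (distmx R (S2 a e)).
Proof.
move=> a0 h0 h2 nz; rewrite distS //.
set D := \matrix_(i, j) _.
have D0 : forall i j, 0 <= D i j.
  by move=> i j; rewrite mxE; case: eqP => _; rewrite ?Md_ge0.
have [r Hr] := eig_bounded D0.
apply: (lambda1_ge Hr); apply/eigenvalueP; exists (\row_i w3 w0 0 w2 (clS i)).
  apply/rowP => j; rewrite mulS [RHS]mxE mxE /w3.
  by case: (clS_range j) => ->.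
apply: contraNneq nz => /rowP/(_ (lshift e (Ordinal a0))).
by rewrite !mxE clS_l /w3 /= => ->.
Qed.

End Eig.


Section Fam.
Variable R : realType.

Lemma eqle (x y : R) : x = y -> x <= y. Proof. by move=> ->. Qed.

Lemma ivt_cubic (d c2 c1 c0 r U : R) : r <= U ->
  d * r ^+ 3 + c2 * r ^+ 2 + c1 * r + c0 < 0 ->
  0 <= d * U ^+ 3 + c2 * U ^+ 2 + c1 * U + c0 ->
  exists x, r < x /\ d * x ^+ 3 + c2 * x ^+ 2 + c1 * x + c0 = 0.
Proof.
move=> rU hr hU.
pose p : {poly R} := d%:P * 'X ^+ 3 + c2%:P * 'X ^+ 2 + c1%:P * 'X + c0%:P.
have pE y : p.[y] = d * y ^+ 3 + c2 * y ^+ 2 + c1 * y + c0 by rewrite /p !hornerE.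
have H : p.[r] <= 0 <= p.[U] by rewrite !pE (ltW hr) hU.
have [x /andP[rx xU] rt] := @poly_ivt R p r U rU H.
move: rt; rewrite /root pE => /eqP px; exists x; split => //.
rewrite lt_neqAle rx andbT; apply/eqP => erx; move: hr; rewrite erx px.
by rewrite ltxx.
Qed.

Definition fG (m : nat) (x : R) := x ^+ 3 - (m%:R - 1) * x ^+ 2 - (5 * m%:R + 1) * x - (3 * m%:R + 1).

Lemma G_up (m : nat) (r : R) : (0 < m)%N -> 1 < r -> 0 <= fG m r ->
  lambda1 (distmx R (T 1 m 1)) <= r.
Proof.
move=> m0 r1 hf.
have mp : 0 < m%:R :> R by rewrite ltr0n.
have rp : 0 < r by apply: lt_trans r1.
have r21 : 0 < r ^+ 2 - 1 by rewrite subr_gt0 expr_gt1 // ltW.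
apply: (@T_up _ _ _ _ _ (m%:R * r * (r + 2)) (r * (r ^+ 2 - 1)) (m%:R * (2 * r ^+ 2 + r))).
- by [].
- by rewrite !mulr_gt0 // addr_gt0.
- by rewrite mulr_gt0.
- by rewrite mulr_gt0 // addr_gt0 // mulr_gt0 // exprn_gt0.
- exact: ltW.
- by apply: eqle; ring.
- rewrite -subr_ge0 (_ : _ - _ = r * fG m r); first by rewrite mulr_ge0 // ltW.
  by rewrite /fG; ring.
- by apply: eqle; ring.
Qed.

Lemma G_low (m : nat) (r U : R) : (0 < m)%N -> 1 < r -> fG m r < 0 -> 0 <= fG m U -> r <= U ->
  r < lambda1 (distmx R (T 1 m 1)).
Proof.
move=> m0 r1 hr hU rU.
have fE y : fG m y = 1 * y ^+ 3 + - (m%:R - 1) * y ^+ 2 + - (5 * m%:R + 1) * y + - (3 * m%:R + 1).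
  by rewrite /fG; ring.
rewrite !fE in hr hU.
have [x [rx fx]] := ivt_cubic rU hr hU.
have x1 : 1 < x by apply: lt_trans rx.
have xp : 0 < x by apply: lt_trans x1.
apply: (lt_le_trans rx).
apply: (@T_low _ _ _ _ _ (m%:R * x * (x + 2)) (x * (x ^+ 2 - 1)) (m%:R * (2 * x ^+ 2 + x))).
- by [].
- by ring.
- apply/eqP; rewrite -subr_eq0; apply/eqP.
  transitivity (- (x * (1 * x ^+ 3 + - (m%:R - 1) * x ^+ 2 + - (5 * m%:R + 1) * x + - (3 * m%:R + 1)))); first by ring.
  by rewrite fx mulr0 oppr0.
- by ring.
- have x21 : 0 < x ^+ 2 - 1 by rewrite subr_gt0 expr_gt1 // ltW.
  by apply: Or32; split => //; rewrite mulf_neq0 // gt_eqF.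
Qed.

Definition w0H (s c : nat) (x : R) := (x - 2 * s%:R + 2) * (x + c%:R + 1) - 2 * c%:R * (x + 2).
Definition hH (s c : nat) (x : R) :=
  (s%:R - 1 - x) * w0H s c x + c%:R * (s%:R * (x + 2)) + s%:R * (s%:R * (x + c%:R + 1)).

Lemma H_low (s c : nat) (r U : R) : (0 < s)%N -> 0 <= r -> 0 < hH s c r -> hH s c U <= 0 -> r <= U ->
  r < lambda1 (distmx R (T s c s)).
Proof.
move=> s0 r0 hr hU rU.
have hE y : - hH s c y = 1 * y ^+ 3 + (4 - c%:R - 3 * s%:R) * y ^+ 2
   + (5 - 3 * c%:R - 2 * c%:R * s%:R - 7 * s%:R + s%:R ^+ 2) * y
   + (2 - 2 * c%:R - 2 * c%:R * s%:R + c%:R * s%:R ^+ 2 - 4 * s%:R + s%:R ^+ 2).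
  by rewrite /hH /w0H; ring.
have hr' : - hH s c r < 0 by rewrite oppr_lt0.
have hU' : 0 <= - hH s c U by rewrite oppr_ge0.
rewrite !hE in hr' hU'.
have [x [rx fx]] := ivt_cubic rU hr' hU'.
have xp : 0 <= x by apply: le_trans (ltW rx).
apply: (lt_le_trans rx).
have sp : 0 < s%:R :> R by rewrite ltr0n.
apply: (@T_low _ _ _ _ _ (w0H s c x) (s%:R * (x + 2)) (s%:R * (x + c%:R + 1))).
- by [].
- apply/eqP; rewrite -subr_eq0; apply/eqP.
  transitivity (- (- hH s c x)); first by rewrite opprK /hH /w0H; ring.
  by rewrite hE fx oppr0.
- by rewrite /w0H; ring.
- by rewrite /w0H; ring.
- apply: Or33; split => //; rewrite mulf_neq0 ?gt_eqF //.
  have c0 : 0 <= c%:R :> R := ler0n _ _.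
  lra.
Qed.

Definition gS (a e : nat) (x : R) := (x - a%:R + 1) * (x - 2 * e%:R + 2) - a%:R * e%:R.

Lemma S_up' (a e : nat) (r : R) : (0 < a)%N -> (0 < e)%N -> a%:R - 1 < r -> 0 <= gS a e r ->
  lambda1 (distmx R (S2 a e)) <= r.
Proof.
move=> a0 e0 ra hg.
have ep : 0 < e%:R :> R by rewrite ltr0n.
have r0 : 0 <= r.
  apply: le_trans (ltW ra); rewrite subr_ge0 ler1n //.
apply: (@S_up _ _ _ _ (e%:R) (r - a%:R + 1)) => //.
- lra.
- by apply: eqle; ring.
- rewrite -subr_ge0 (_ : _ - _ = gS a e r) //; rewrite /gS; ring.
Qed.

Lemma S_low' (a e : nat) (r U : R) : (0 < a)%N -> (0 < e)%N -> gS a e r < 0 -> 0 <= gS a e U -> r <= U ->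
  r < lambda1 (distmx R (S2 a e)).
Proof.
move=> a0 e0 hr hU rU.
have gE y : gS a e y = 0 * y ^+ 3 + 1 * y ^+ 2 + (3 - a%:R - 2 * e%:R) * y
  + ((1 - a%:R) * (2 - 2 * e%:R) - a%:R * e%:R).
  by rewrite /gS; ring.
rewrite !gE in hr hU.
have [x [rx fx]] := ivt_cubic rU hr hU.
apply: (lt_le_trans rx).
have ep : 0 < e%:R :> R by rewrite ltr0n.
apply: (@S_low _ _ _ _ (e%:R) (x - a%:R + 1)) => //.
- by ring.
- apply/eqP; rewrite -subr_eq0; apply/eqP.
  transitivity (- gS a e x); first by rewrite /gS; ring.
  by rewrite gE fx oppr0.
- by rewrite gt_eqF.
Qed.

End Fam.


Section Fin.
Variable R : realType.
Local Notation L g := (lambda1 (distmx R g)).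

Lemma pos_i (p q : R) : 0 <= p -> 0 <= q -> 4 <= 2 * p + q ->
  0 < -98 + 26 * p + 35 * p * q + 3 * p * q ^+ 2 + 19 * p ^+ 2 + 6 * p ^+ 2 * q + 2 * p ^+ 3 + 13 * q + 3 * q ^+ 2.
Proof.
move=> hp hq h.
have h1 : 0 <= p * q by apply: mulr_ge0.
have h2 : 0 <= p * q ^+ 2 by rewrite mulr_ge0 // exprn_ge0.
have h3 : 0 <= p ^+ 2 * q by rewrite mulr_ge0 // exprn_ge0.
have h4 : 0 <= p ^+ 3 by rewrite exprn_ge0.
nra.
Qed.

Lemma pos_i2 (p q : R) : 0 <= p -> 0 <= q ->
  0 <= 918 + 756 * p + 208 * p * q + 16 * p * q ^+ 2 + 211 * p ^+ 2 + 27 * p ^+ 2 * q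
     + 20 * p ^+ 3 + 404 * q + 66 * q ^+ 2 + 4 * q ^+ 3.
Proof.
move=> hp hq.
have h1 : 0 <= p * q by apply: mulr_ge0.
have h2 : 0 <= p * q ^+ 2 by rewrite mulr_ge0 // exprn_ge0.
have h3 : 0 <= p ^+ 2 * q by rewrite mulr_ge0 // exprn_ge0.
have h4 : 0 <= p ^+ 3 by rewrite exprn_ge0.
have h5 : 0 <= q ^+ 3 by rewrite exprn_ge0.
have h6 : 0 <= q ^+ 2 by rewrite exprn_ge0.
have h7 : 0 <= p ^+ 2 by rewrite exprn_ge0.
lra.
Qed.

Lemma conc_i (s c m : nat) (r U : R) : (0 < m)%N -> (0 < s)%N -> 1 < r -> 0 <= fG m r ->
  0 < hH s c r -> hH s c U <= 0 -> r <= U -> L (T 1 m 1) < L (T s c s).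
Proof.
move=> m0 s0 r1 hf hr hU rU; apply: (@le_lt_trans _ _ r); first exact: G_up.
by apply: (@H_low _ _ _ _ U) => //; apply: ltW; apply: lt_trans r1.
Qed.

Lemma strict_i (s n : nat) : (2 <= s)%N -> (2 * s + 2 <= n)%N ->
  L (T 1 (n - 2) 1) < L (T s (n - 2 * s) s).
Proof.
move=> hs hn.
have [n10|n9] := leqP 10 n.
  have n2 : (2 <= n)%N by lia.
  have n2s : (2 * s <= n)%N by lia.
  apply: (@le_lt_trans _ _ (n%:R + 2)).
    apply: G_up; first by lia.
      have : (10 <= n%:R :> R) by rewrite ler_nat.
      lra.
    rewrite /fG natrB //.
    have : (10 <= n%:R :> R) by rewrite ler_nat.
    nra.
  apply: (@H_low _ _ _ _ (2 * n%:R)); first by lia.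
  - have : (10 <= n%:R :> R) by rewrite ler_nat.
    lra.
  - have hS : (2 <= s%:R :> R) by rewrite ler_nat.
    have hN : (2 * s%:R + 2 <= n%:R :> R).
      by rewrite -(ler_nat R) natrD natrM in hn.
    have hN' : (10 <= n%:R :> R) by rewrite ler_nat.
    have := @pos_i (s%:R - 2) (n%:R - 2 * s%:R - 2).
    rewrite /hH /w0H natrB // natrM.
    move=> H; have {}H := H (ltac:(lra)) (ltac:(lra)) (ltac:(lra)).
    apply: lt_le_trans H _; apply: eqle; ring.
  - have hS : (2 <= s%:R :> R) by rewrite ler_nat.
    have hN : (2 * s%:R + 2 <= n%:R :> R).
      by rewrite -(ler_nat R) natrD natrM in hn.
    have := @pos_i2 (s%:R - 2) (n%:R - 2 * s%:R - 2).
    rewrite /hH /w0H natrB // natrM.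
    move=> H; have {}H := H (ltac:(lra)) (ltac:(lra)).
    rewrite -oppr_ge0; apply: le_trans H _; apply: eqle; ring.
  - have : (10 <= n%:R :> R) by rewrite ler_nat.
    lra.
have [s2|s3] : s = 2%N \/ s = 3%N by lia.
- subst s.
  have [->|[->|[->|->]]] : n = 6%N \/ n = 7%N \/ n = 8%N \/ n = 9%N by lia.
  + by apply: (@conc_i 2 2 4 (27/4) 12) => //; rewrite /fG /hH /w0H; lra.
  + by apply: (@conc_i 2 3 5 8 14) => //; rewrite /fG /hH /w0H; lra.
  + by apply: (@conc_i 2 4 6 9 16) => //; rewrite /fG /hH /w0H; lra.
  + by apply: (@conc_i 2 5 7 10 18) => //; rewrite /fG /hH /w0H; lra.
- subst s.
  have [->|->] : n = 8%N \/ n = 9%N by lia.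
  + by apply: (@conc_i 3 2 6 9 16) => //; rewrite /fG /hH /w0H; lra.
  + by apply: (@conc_i 3 3 7 10 18) => //; rewrite /fG /hH /w0H; lra.
Qed.


Lemma conc_S (a e m : nat) (r U : R) : (0 < m)%N -> (0 < a)%N -> (0 < e)%N -> 1 < r ->
  0 <= fG m r -> gS a e r < 0 -> 0 <= gS a e U -> r <= U -> L (T 1 m 1) < L (S2 a e).
Proof.
move=> m0 a0 e0 r1 hf hr hU rU; apply: (@le_lt_trans _ _ r); first exact: G_up.
exact: (@S_low' _ _ _ _ U).
Qed.

Lemma conc_iv (a e m : nat) (r U : R) : (0 < m)%N -> (0 < a)%N -> (0 < e)%N -> 1 < r ->
  a%:R - 1 < r -> 0 <= gS a e r -> fG m r < 0 -> 0 <= fG m U -> r <= U -> L (S2 a e) < L (T 1 m 1).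
Proof.
move=> m0 a0 e0 r1 ra hg hf hU rU; apply: (@le_lt_trans _ _ r); first exact: S_up'.
exact: (@G_low _ _ _ U).
Qed.

Lemma strict_ii (s : nat) : (2 <= s)%N ->
  L (T 1 (2 * s + 1 - 2) 1) < L (S2 s (2 * s + 1 - s)).
Proof.
move=> hs.
have [s5|s4] := leqP 5 s.
  have hS : (5 <= s%:R :> R) by rewrite ler_nat.
  apply: (@conc_S _ _ _ (2 * s%:R + 3) (4 * s%:R + 2)); try lia.
  - lra.
  - rewrite /fG natrB; last by lia.
    rewrite natrD natrM; nra.
  - rewrite /gS natrB; last by lia.
    rewrite natrD natrM; nra.
  - rewrite /gS natrB; last by lia.
    rewrite natrD natrM; nra.
  - lra.
have [->|[->|->]] : s = 2%N \/ s = 3%N \/ s = 4%N by lia.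
- by apply: (@conc_S 2 3 3 (134/25) 10) => //; rewrite /fG /gS; lra.
- by apply: (@conc_S 3 4 5 (39/5) 14) => //; rewrite /fG /gS; lra.
- by apply: (@conc_S 4 5 7 10 18) => //; rewrite /fG /gS; lra.
Qed.

Lemma strict_iii (s : nat) : (5 <= s)%N ->
  L (T 1 (2 * s - 2) 1) < L (S2 s (2 * s - s)).
Proof.
move=> hs.
have [s7|s6] := leqP 7 s.
  have hS : (7 <= s%:R :> R) by rewrite ler_nat.
  apply: (@conc_S _ _ _ (2 * s%:R + 2) (4 * s%:R)); try lia.
  - lra.
  - rewrite /fG natrB; last by lia.
    rewrite natrM; nra.
  - rewrite /gS natrB; last by lia.
    rewrite natrM; nra.
  - rewrite /gS natrB; last by lia.
    rewrite natrM; nra.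
  - lra.
have [->|->] : s = 5%N \/ s = 6%N by lia.
- by apply: (@conc_S 5 5 8 (56/5) 20) => //; rewrite /fG /gS; lra.
- by apply: (@conc_S 6 6 10 (27/2) 24) => //; rewrite /fG /gS; lra.
Qed.

Lemma strict_iv (s : nat) : (2 <= s)%N -> (s <= 4)%N ->
  L (S2 s (2 * s - s)) < L (T 1 (2 * s - 2) 1).
Proof.
move=> h2 h4.
have [->|[->|->]] : s = 2%N \/ s = 3%N \/ s = 4%N by lia.
- by apply: (@conc_iv 2 2 2 4 8) => //; rewrite /fG /gS; lra.
- by apply: (@conc_iv 3 3 4 (63/10) 12) => //; rewrite /fG /gS; lra.
- by apply: (@conc_iv 4 4 6 (351/40) 16) => //; rewrite /fG /gS; lra.
Qed.

Lemma dG n : distmx R (Gstar n) = distmx R (T 1 (n - 2) 1).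
Proof.
apply: distmx_ext => i j; rewrite /Gstar /T /gjoin /gunion.
case: (split i) => x; case: (split j) => y //.
case: (split x) => x'; case: (split y) => y' //.
by rewrite /complete /edgeless (ord1 x') (ord1 y') eqxx.
Qed.

Lemma eq3 : distmx R (T 1 1 1) = distmx R (S2 1 2).
Proof.
apply: distmx_ext => i j; rewrite /T /S2 /gjoin /gunion.
case: (split_ordP i) => [x Ei|x Ei]; case: (split_ordP j) => [y Ej|y Ej];
  rewrite ?Ei ?Ej ?split_l ?split_r //.
case: (split_ordP x) => [x' Ex|x' Ex]; case: (split_ordP y) => [y' Ey|y' Ey];
  rewrite ?Ex ?Ey ?split_l ?split_r //.
by rewrite /complete /edgeless (ord1 x') (ord1 y') eqxx.
Qed.

Lemma eq2 : distmx R (S2 1 1) = distmx R (T 1 0 1).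
Proof.
apply: distmx_ext => i j; rewrite /T /S2 /gjoin /gunion.
case: (split_ordP i) => [x Ei|x Ei]; case: (split_ordP j) => [y Ej|y Ej];
  rewrite ?Ei ?Ej ?split_l ?split_r //.
case: (@split_ordP 0 1 x) => [x' Ex|x' Ex]; first by case: x' Ex.
case: (@split_ordP 0 1 y) => [y' Ey|y' Ey]; first by case: y' Ey.
by [].
Qed.

End Fin.

Unset Implicit Arguments.

Theorem lemma2p8 (R : realType) (s n : nat) (hs : (1 <= s)%N) (hn : (2 * s <= n)%N) :
  let l := fun N (g : graph N) => lambda1 (distmx R g) in
  ((2 * s + 2 <= n)%N ->
     l _ (Gstar n) <= l _ (Hsn s n) /\ (l _ (Gstar n) = l _ (Hsn s n) <-> s = 1%N)) /\
  (n = (2 * s + 1)%N ->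
     l _ (Gstar n) <= l _ (Snk n (n.-1)./2) /\
     (l _ (Gstar n) = l _ (Snk n (n.-1)./2) <-> n = 3%N)) /\
  (n = (2 * s)%N -> (10 <= n)%N -> l _ (Gstar n) < l _ (Snk n n./2)) /\
  (n = (2 * s)%N -> (2 <= n <= 8)%N ->
     l _ (Snk n n./2) <= l _ (Gstar n) /\ (l _ (Snk n n./2) = l _ (Gstar n) <-> n = 2%N)).
Proof.
move=> l; rewrite {}/l /=.
split; [|split; [|split]].
- move=> h; rewrite dG.
  change (distmx R (Hsn s n)) with (distmx R (T s (n - 2 * s) s)).
  have [s1|s2] : s = 1%N \/ (2 <= s)%N by lia.
    subst s; rewrite (_ : (n - 2 * 1 = n - 2)%N); last by rewrite muln1.
    by split.
  have H := strict_i R s2 h.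
  split; first exact: ltW.
  split => [E|E]; last by lia.
  by move: H; rewrite E ltxx.
- move=> h; subst n.
  have -> : ((2 * s + 1).-1)./2 = s by rewrite addn1 /= mul2n doubleK.
  rewrite dG.
  change (distmx R (Snk (2 * s + 1) s)) with (distmx R (S2 s (2 * s + 1 - s))).
  have [s1|s2] : s = 1%N \/ (2 <= s)%N by lia.
    subst s.
    have E : lambda1 (distmx R (T 1 (2 * 1 + 1 - 2) 1)) = lambda1 (distmx R (S2 1 (2 * 1 + 1 - 1))).
      exact: (congr1 (@lambda1 R 3) (eq3 R)).
    by rewrite E.
  have H := strict_ii R s2.
  split; first exact: ltW.
  split => [E|E]; last by lia.
  by move: H; rewrite E ltxx.
- move=> h h10; subst n.
  have -> : (2 * s)./2 = s by rewrite mul2n doubleK.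
  rewrite dG.
  change (distmx R (Snk (2 * s) s)) with (distmx R (S2 s (2 * s - s))).
  apply: strict_iii; lia.
- move=> h /andP[h2 h8]; subst n.
  have -> : (2 * s)./2 = s by rewrite mul2n doubleK.
  rewrite dG.
  change (distmx R (Snk (2 * s) s)) with (distmx R (S2 s (2 * s - s))).
  have [s1|s2] : s = 1%N \/ (2 <= s)%N by lia.
    subst s.
    have E : lambda1 (distmx R (S2 1 (2 * 1 - 1))) = lambda1 (distmx R (T 1 (2 * 1 - 2) 1)).
      exact: (congr1 (@lambda1 R 2) (eq2 R)).
    by rewrite E.
  have H := strict_iv R s2 (ltac:(lia)).
  split; first exact: ltW.
  split => [E|E]; last by lia.
  by move: H; rewrite E ltxx.
Qed.
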